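(* Let $R=R_1\times\cdots\times R_n$ be a direct product of commutative rings with nonzero identity and let $I=I_1\times\cdots\times I_n$ be an ideal of $R$, with $I_i$ an ideal of $R_i$. If $x_i$ is adjacent to $y_i$ in $\Gamma''_{I_i}(R_i)$ for some $1\leq i\leq n$, then every element of $R$ with $i$-th component $x_i$ is adjacent in $\Gamma''_I(R)$ to every element of $R$ with $i$-th component $y_i$.
   Context: The product has componentwise operations. For a commutative ring $S$ and an ideal $J$ of $S$, $\Gamma''_J(S)$ is the simple undirected graph whose vertex set is $\{x\in S\setminus J : xS+J\neq S\}$, with distinct vertices $x,y$ adjacent if and only if $x\notin yS+J$ and $y\notin xS+J$. *)

(* Defs.v *)
From mathcomp Require Import all_boot all_algebra.
Set Implicit Arguments. Unset Strict Implicit. Unset Printing Implicit Defensive.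
Import GRing.Theory.
Local Open Scope ring_scope.

(* Generic version of the graph Gamma''_J(S), stated for a carrier T with an
   addition, a multiplication and an ideal J (given as a predicate).  It is
   instantiated both for a comNzRingType and for the direct product of rings
   (dependent functions with componentwise operations). *)

Definition in_span {T : Type} (add mul : T -> T -> T) (J : T -> Prop) (y x : T) : Prop :=
  exists s j, J j /\ x = add (mul y s) j.

Definition gvert {T : Type} (add mul : T -> T -> T) (J : T -> Prop) (x : T) : Prop :=
  ~ J x /\ ~ (forall z, in_span add mul J x z).

Definition gadj {T : Type} (add mul : T -> T -> T) (J : T -> Prop) (x y : T) : Prop :=
  [/\ x <> y, gvert add mul J x, gvert add mul J y,
      ~ in_span add mul J y x & ~ in_span add mul J x y].

Definition is_ideal (S : comNzRingType) (J : {pred S}) : Prop :=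
  [/\ 0 \in J, {in J &, forall u v, u + v \in J} & forall a, {in J, forall u, a * u \in J}].

Definition adjGamma (S : comNzRingType) (J : {pred S}) (x y : S) : Prop :=
  gadj +%R *%R (fun z => z \in J) x y.

Definition prodR (n : nat) (R : 'I_n -> comNzRingType) : Type := forall i, R i.
Definition prod_add n (R : 'I_n -> comNzRingType) (x y : prodR R) : prodR R :=
  fun i => x i + y i.
Definition prod_mul n (R : 'I_n -> comNzRingType) (x y : prodR R) : prodR R :=
  fun i => x i * y i.
Definition prod_ideal n (R : 'I_n -> comNzRingType) (I : forall i, {pred R i})
  (x : prodR R) : Prop := forall i, x i \in I i.

Definition adjGamma_prod n (R : 'I_n -> comNzRingType) (I : forall i, {pred R i})
  (x y : prodR R) : Prop :=
  gadj (@prod_add n R) (@prod_mul n R) (prod_ideal I) x y.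

(* Main.v *)
Require Import Defs.
From mathcomp Require Import all_boot all_algebra.
Import GRing.Theory.
Local Open Scope ring_scope.

Lemma vert_lift (n : nat) (R : 'I_n -> comNzRingType)
  (I : forall i, {pred R i}) (hI : forall i, is_ideal (I i))
  (i : 'I_n) (x : prodR R) :
  gvert +%R *%R (fun z => z \in I i) (x i) ->
  gvert (@prod_add n R) (@prod_mul n R) (prod_ideal I) x.
Proof.
move=> [nJ nS]; split.
  by move=> H; apply: nJ; exact: H.
move=> H; apply: nS => zi.
have [s [j [Jj E]]] := H (fun k => 1).
have E1 : 1 = x i * s i + j i by move: (congr1 (fun f => f i) E).
have [_ Hadd Hmul] := hI i.
exists (s i * zi), (j i * zi); split.
  by rewrite mulrC; apply: Hmul; apply: Jj.
by rewrite mulrA -mulrDl -E1 mul1r.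
Qed.

Lemma span_lift (n : nat) (R : 'I_n -> comNzRingType)
  (I : forall i, {pred R i}) (i : 'I_n) (x y : prodR R) :
  in_span (@prod_add n R) (@prod_mul n R) (prod_ideal I) y x ->
  in_span +%R *%R (fun z => z \in I i) (y i) (x i).
Proof.
move=> [s [j [Jj E]]]; exists (s i), (j i); split; first exact: Jj.
by move: (congr1 (fun f => f i) E).
Qed.

Theorem lemma2p1 (n : nat) (R : 'I_n -> comNzRingType)
  (I : forall i, {pred R i}) (hI : forall i, is_ideal (I i))
  (i : 'I_n) (xi yi : R i) :
  adjGamma (I i) xi yi ->
  forall x y : prodR R, x i = xi -> y i = yi -> adjGamma_prod I x y.
Proof.
move=> [ne vx vy nyx nxy] x y Hx Hy; subst xi yi; split.
- by move=> E; apply: ne; rewrite E.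
- exact: vert_lift vx.
- exact: vert_lift vy.
- by move=> H; apply: nyx; exact: span_lift H.
- by move=> H; apply: nxy; exact: span_lift H.
Qed.
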